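(* In the setting described in the context, for every $\gamma \in (0,\frac12)$ and every $\lambda_0 > 1$ we have, at every point of $\mathbb{R}^n$, \[\max\{u_0,\dots,u_q\} \leq \hat u_q \leq \max\{u_0,\dots,u_q\} + \sum_{k=1}^q \lambda_k^{-1}.\] In particular, $\bigcap_{m=0}^q \{u_m \leq -\lambda_0^{-1}\} \subset \hat\Omega \subset \Omega$.
   Context: $n\ge 3$, $u_0,\dots,u_q$ are non-constant linear (affine) functions on $\mathbb{R}^n$, and $\Omega=\bigcap_{m=0}^q\{u_m\le 0\}$ is a compact convex polytope with non-empty interior. Fix a smooth even function $\eta:\mathbb{R}\to\mathbb{R}$ with $\eta(t)=|t|$ for $|t|\ge \frac12$ and $\eta''\ge 0$ everywhere. For $\gamma\in(0,\frac12)$ and $\lambda_0>1$ set $\lambda_k=\gamma^{-k}\lambda_0$ for $1\le k\le q$. Define $\hat u_0=u_0$ and, for $1\le k\le q$, $\hat u_k=\frac12\big(\hat u_{k-1}+u_k+\lambda_k^{-1}\eta(\lambda_k(\hat u_{k-1}-u_k))\big)$. Set $\hat\Omega=\{\hat u_q\le 0\}$. *)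

(* Defs.v *)
From HB Require Import structures.
From mathcomp Require Import all_boot all_order all_algebra.
From mathcomp Require Import all_classical all_reals all_analysis.
Set Implicit Arguments. Unset Strict Implicit. Unset Printing Implicit Defensive.
Import Order.TTheory GRing.Theory Num.Theory.
Import numFieldNormedType.Exports.
Local Open Scope ring_scope.
Local Open Scope classical_set_scope.

(* u : R^n -> R is affine (linear in the paper's terminology) and non-constant *)
Definition nonconst_affine (R : realType) (n : nat) (u : 'rV[R]_n -> R) : Prop :=
  exists (a : 'rV[R]_n) (b : R), a != 0 /\ forall x, u x = \sum_(i < n) a 0 i * x 0 i + b.

Definition smooth_fun (R : realType) (eta : R -> R) : Prop :=
  forall (k : nat) (t : R), derivable (derive1n k eta) t 1.

Definition lam (R : realType) (gamma lambda0 : R) (k : nat) : R :=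
  gamma ^- k * lambda0.

Fixpoint hatu (R : realType) (n : nat) (eta : R -> R) (gamma lambda0 : R)
  (u : nat -> 'rV[R]_n -> R) (k : nat) (x : 'rV[R]_n) : R :=
  match k with
  | 0 => u 0%N x
  | k'.+1 =>
      let h := hatu eta gamma lambda0 u k' x in
      let l := lam gamma lambda0 k in
      (h + u k x + l^-1 * eta (l * (h - u k x))) / 2
  end.

Definition Omega (R : realType) (n q : nat) (u : nat -> 'rV[R]_n -> R) : set 'rV[R]_n :=
  [set x | forall m, (m <= q)%N -> u m x <= 0].

(* Main.v *)
Require Import Defs.
From HB Require Import structures.
From mathcomp Require Import all_boot all_order all_algebra.
From mathcomp Require Import all_classical all_reals all_analysis.
From mathcomp Require Import lra.
Import Order.TTheory GRing.Theory Num.Theory.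
Import numFieldNormedType.Exports.
Local Open Scope ring_scope.
Local Open Scope classical_set_scope.

Lemma eta_bounds (R : realType) (eta : R -> R)
  (Hsmooth : forall (k : nat) (t : R), derivable (derive1n k eta) t 1)
  (Heven : forall t, eta (- t) = eta t)
  (Habs : forall t, 1 / 2 <= `|t| -> eta t = `|t|)
  (Hconv : forall t, 0 <= derive1n 2 eta t) :
  forall t, `|t| <= eta t <= `|t| + 2.
Proof.
have de t : derivable eta t 1 := Hsmooth 0%N t.
have dd t : derivable (derive1 eta) t 1 := Hsmooth 1%N t.
have mono : {homo derive1 eta : x y / x <= y}.
  move=> x y xy.
  have := @ger0_derive1_le_cc R (derive1 eta) x y (fun z _ => dd z)
    (fun z _ => Hconv z).
  apply.
  - by apply: derivable_within_continuous => z _; exact: dd.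
  - by rewrite in_itv /= lexx xy.
  - by rewrite in_itv /= lexx xy.
  - exact: xy.
have d1 : derive1 eta 1 = 1.
  rewrite derive1E.
  have nr : \forall y \near (1:R), eta y = id y.
    have : - (1:R) < - (1/2) by lra.
    move/Nlt_nbhsl; apply: filterS => y hy.
    rewrite Habs /= ?gtr0_norm //; lra.
  rewrite (near_eq_derive _ nr); exact: derive_id.
have dm1 : derive1 eta (-1) = -1.
  rewrite derive1E.
  have nr : \forall y \near (-1:R), eta y = (- id) y.
    have : (-1:R) < - (1/2) by lra.
    move/lt_nbhsl; apply: filterS => y hy.
    rewrite Habs /= ?ltr0_norm //; lra.
  rewrite (near_eq_derive _ nr).
  have := @is_deriveN R R^o R^o id (-1) 1 1 (is_derive_id _ _).
  by case => _ ->.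
have pos t : 0 <= t < 1 -> t <= eta t <= 2.
  move=> /andP[t0 t1].
  have ce : {within `[t, 1], continuous eta}.
    by apply: derivable_within_continuous => z _; exact: de.
  have [c cI E] := @MVT R eta (derive1 eta) t 1 t1
    (fun x _ => ltac:(rewrite derive1E; exact: derivableP (de x))) ce.
  have e1 : eta 1 = 1 by rewrite Habs ?normr1 //; lra.
  rewrite e1 in E.
  move: cI; rewrite in_itv /= => /andP[tc c1'].
  have c1 : derive1 eta c <= 1.
    by rewrite -d1; apply: mono; exact: ltW.
  have c2 : -1 <= derive1 eta c.
    rewrite -dm1; apply: mono; lra.
  have : 0 <= 1 - t by lra.
  move=> h; apply/andP; split; nra.
move=> t.
have [ht|ht] := leP (1/2) `|t|.
  by rewrite Habs // lexx /=; lra.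
have [t0|t0] := leP 0 t.
  rewrite ger0_norm //.
  have := pos t; rewrite t0 /=; move=> /(_ ltac:(by move: ht; rewrite ger0_norm //; lra)).
  move=> /andP[a b]; apply/andP; split; lra.
rewrite ltr0_norm // -Heven.
have := pos (-t); move=> /(_ ltac:(by move: ht; rewrite ltr0_norm //; lra)).
move=> /andP[a b]; apply/andP; split; lra.
Qed.

Lemma bigmax_leP0 (R : realType) k : forall (f : nat -> R) (d c : R),
  (\big[Num.max/d]_(m < k) f m <= c) <-> (d <= c /\ forall m, (m < k)%N -> f m <= c).
Proof.
elim: k => [|k IH] f d c.
  by rewrite big_ord0; split => [h|[]//]; split.
rewrite big_ord_recl ge_max.
have -> : \big[Num.max/d]_(i < k) f (lift ord0 i) = \big[Num.max/d]_(i < k) (fun m => f m.+1) i.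
  by apply: eq_bigr => i _; rewrite lift0.
split.
  move=> /andP[h0 /(IH (fun m => f m.+1)) [hd h]]; split => // -[|m] //= mk; exact: h.
move=> [hd h]; apply/andP; split; first exact: h.
by apply/(IH (fun m => f m.+1)); split => // m mk; apply: h.
Qed.

Lemma bigmax_leP (R : realType) (f : nat -> R) k c :
  (\big[Num.max/f 0%N]_(m < k.+1) f m <= c) <-> (forall m, (m <= k)%N -> f m <= c).
Proof.
rewrite bigmax_leP0; split; first by move=> [].
by move=> h; split; [apply: h|move=> m; rewrite ltnS; exact: h].
Qed.

Lemma hat_step (R : realType) (eta : R -> R)
  (Heta : forall t, `|t| <= eta t <= `|t| + 2) (l h v : R) : 0 < l ->
  Num.max h v <= (h + v + l^-1 * eta (l * (h - v))) / 2 <= Num.max h v + l^-1.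
Proof.
move=> l0; have /andP[a b] := Heta (l * (h - v)).
rewrite normrM gtr0_norm // in a b.
have li : l^-1 * l = 1 by rewrite mulVf // gt_eqF.
have lp : 0 < l^-1 by rewrite invr_gt0.
have a' : `|h - v| <= l^-1 * eta (l * (h - v)).
  by rewrite -(ler_pM2l l0) mulrA divff ?gt_eqF // mul1r.
have b' : l^-1 * eta (l * (h - v)) <= `|h - v| + 2 * l^-1.
  rewrite -(ler_pM2l l0) mulrA divff ?gt_eqF // mul1r [X in _ <= X]mulrDr.
  by rewrite mulrCA divff ?gt_eqF // mulr1.
have [hv|hv] := leP h v.
  rewrite ler0_norm ?subr_le0 // in a' b'.
  apply/andP; split; lra.
rewrite gtr0_norm ?subr_gt0 // in a' b'.
apply/andP; split; lra.
Qed.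

Arguments eta_bounds {R eta}.
Arguments bigmax_leP0 {R}.
Arguments bigmax_leP {R}.
Arguments hat_step {R eta}.

Lemma hat_bounds (R : realType) (n : nat) (eta : R -> R) (gamma lambda0 : R)
  (u : nat -> 'rV[R]_n -> R)
  (Heta : forall t, `|t| <= eta t <= `|t| + 2)
  (hl : forall k, 0 < lam gamma lambda0 k) (x : 'rV[R]_n) k :
  \big[Num.max/u 0%N x]_(m < k.+1) u m x <= hatu eta gamma lambda0 u k x <=
  \big[Num.max/u 0%N x]_(m < k.+1) u m x + \sum_(1 <= j < k.+1) (lam gamma lambda0 j)^-1.
Proof.
elim: k => [|k IH].
  rewrite big_geq // addr0; apply/andP; split.
    by apply/(bigmax_leP (fun m => u m x) 0 (u 0%N x)) => m; rewrite leqn0 => /eqP ->.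
  by apply: (iffLR (bigmax_leP (fun m => u m x) 0 _) (lexx _)).
set Mk := \big[Num.max/u 0%N x]_(m < k.+1) u m x in IH *.
set M := \big[Num.max/u 0%N x]_(m < k.+2) u m x.
set S := \sum_(1 <= j < k.+1) (lam gamma lambda0 j)^-1 in IH *.
have S0 : 0 <= S.
  by apply: sumr_ge0 => j _; rewrite invr_ge0 ltW.
have all : forall m, (m <= k.+1)%N -> u m x <= M.
  by apply/(bigmax_leP (fun m => u m x)).
have MkM : Mk <= M.
  by apply/(bigmax_leP (fun m => u m x)) => m mk; apply: all; rewrite (leq_trans mk).
have vM : u k.+1 x <= M by apply: all.
have -> : \sum_(1 <= j < k.+2) (lam gamma lambda0 j)^-1 = S + (lam gamma lambda0 k.+1)^-1.
  by rewrite big_nat_recr.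
rewrite [hatu _ _ _ _ k.+1 x]/=.
set h := hatu eta gamma lambda0 u k x in IH *.
set v := u k.+1 x in vM *.
set l := lam gamma lambda0 k.+1.
have /andP[st1 st2] := hat_step Heta l h v (hl k.+1).
have /andP[i1 i2] := IH.
apply/andP; split.
  apply/(bigmax_leP (fun m => u m x)) => m; rewrite leq_eqVlt => /orP[/eqP ->|].
    by apply: le_trans st1; rewrite le_max lexx orbT.
  rewrite ltnS => mk; apply: le_trans st1; rewrite le_max; apply/orP; left.
  apply: le_trans i1; exact: (iffLR (bigmax_leP (fun m => u m x) k _) (lexx Mk) m mk).
refine (le_trans st2 _).
rewrite addrA lerD2r ge_max; apply/andP; split.
  by apply: le_trans i2 _; rewrite lerD2r.
by apply: le_trans vM _; rewrite lerDl.
Qed.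

Arguments hat_bounds {R n eta gamma lambda0 u}.

Lemma geom_sum (R : realType) (gamma : R) : 0 < gamma -> gamma <= 1/2 -> forall q,
  \sum_(1 <= k < q.+1) gamma ^+ k <= 1 - gamma ^+ q.
Proof.
move=> g0 g1; elim=> [|q IH].
  by rewrite big_geq // expr0 subrr.
rewrite big_nat_recr //=.
have h : 0 <= gamma ^+ q by rewrite exprn_ge0 // ltW.
rewrite exprS.
have : gamma * gamma ^+ q <= 1/2 * gamma ^+ q by rewrite ler_wpM2r.
lra.
Qed.

Theorem lemma2p7 (R : realType) (n q : nat) (u : nat -> 'rV[R]_n -> R) (eta : R -> R)
  (Hn : (3 <= n)%N)
  (Hu : forall m, (m <= q)%N -> nonconst_affine (u m))
  (Hcpt : compact (Omega q u))
  (Hint : interior (Omega q u) !=set0)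
  (Hsmooth : smooth_fun eta)
  (Heven : forall t, eta (- t) = eta t)
  (Habs : forall t, 1 / 2 <= `|t| -> eta t = `|t|)
  (Hconv : forall t, 0 <= derive1n 2 eta t) :
  forall (gamma lambda0 : R), 0 < gamma < 1 / 2 -> 1 < lambda0 ->
  (forall x : 'rV[R]_n,
     \big[Num.max/u 0%N x]_(m < q.+1) u m x <= hatu eta gamma lambda0 u q x /\
     hatu eta gamma lambda0 u q x <=
       \big[Num.max/u 0%N x]_(m < q.+1) u m x
       + \sum_(1 <= k < q.+1) (lam gamma lambda0 k)^-1)
  /\ [set x | forall m, (m <= q)%N -> u m x <= - lambda0^-1]
       `<=` [set x | hatu eta gamma lambda0 u q x <= 0]
  /\ [set x | hatu eta gamma lambda0 u q x <= 0] `<=` Omega q u.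
Proof.
move=> gamma lambda0 /andP[g0 g1] l1.
have Heta := eta_bounds Hsmooth Heven Habs Hconv.
have l0 : 0 < lambda0 by lra.
have hl : forall k, 0 < lam gamma lambda0 k.
  by move=> k; rewrite /lam mulr_gt0 // invr_gt0 exprn_gt0.
have HB := @hat_bounds R n eta gamma lambda0 u Heta hl.
split; first by move=> x; have /andP[] := HB x q.
split.
  move=> x /= hx.
  have /andP[_ h2] := HB x q.
  apply: le_trans h2 _.
  have hM : \big[Num.max/u 0%N x]_(m < q.+1) u m x <= - lambda0^-1.
    exact/(bigmax_leP (fun m => u m x)).
  have hS : \sum_(1 <= k < q.+1) (lam gamma lambda0 k)^-1 <= lambda0^-1.
    have -> : \sum_(1 <= k < q.+1) (lam gamma lambda0 k)^-1 =
              lambda0^-1 * \sum_(1 <= k < q.+1) gamma ^+ k.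
      rewrite mulr_sumr; apply: eq_bigr => k _.
      by rewrite /lam invfM invrK mulrC.
    have gs := @geom_sum R gamma g0 (ltW g1) q.
    have gq : 0 <= gamma ^+ q by rewrite exprn_ge0 // ltW.
    have li : 0 < lambda0^-1 by rewrite invr_gt0.
    rewrite -[X in _ <= X]mulr1 ler_pM2l //.
    by apply: le_trans gs _; rewrite lerBlDr lerDl.
  by apply: le_trans (lerD hM hS) _; rewrite addNr.
move=> x /= hx m mq.
have /andP[h1 _] := HB x q.
have := le_trans h1 hx => /(bigmax_leP (fun m => u m x)); apply; exact: mq.
Qed.
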